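(* Let $T\in\mathcal{B}(V)$ and $s\in\rho_S(T)$ such that $\|T-\mathrm{Re}[s]\mathcal{I}\|<|s-\mathrm{Re}[s]|$. Then $$S^{-1}(s,T)=\sum_{n\ge0}(T-\mathrm{Re}[s]\mathcal{I})^n\,(s-\mathrm{Re}[s])^{-n-1},$$ the series converging in operator norm.
   Context: $V$ is a bilateral quaternionic Banach space: a real Banach space which is both a left and a right $\mathbb{H}$-vector space with $(av)b=a(vb)$ and $\|av\|=\|va\|=|a|\|v\|$. $\mathcal{B}(V)$ is the space of bounded right-linear operators on $V$; products denote composition, $\mathcal{I}$ is the identity. For $a\in\mathbb{H}$, $a\mathcal{I}$ is $v\mapsto av$, $aT:=(a\mathcal{I})T$, $Ta:=T(a\mathcal{I})$ (so $A^n b$ means $v\mapsto A^n(bv)$). $\sigma_S(T)=\{s: T^2-2\mathrm{Re}[s]T+|s|^2\mathcal{I}$ not invertible in $\mathcal{B}(V)\}$, $\rho_S(T)=\mathbb{H}\setminus\sigma_S(T)$, and for $s\in\rho_S(T)$, $S^{-1}(s,T)=-(T^2-2\mathrm{Re}[s]T+|s|^2\mathcal{I})^{-1}(T-\bar s\mathcal{I})$. *)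

(* Defs.v *)
From Stdlib Require Import Reals.
Open Scope R_scope.

Record quat : Type := Quat { q0 : R; q1 : R; q2 : R; q3 : R }.

Definition qreal (r : R) : quat := Quat r 0 0 0.
Definition qzero : quat := qreal 0.
Definition qone : quat := qreal 1.
Definition qadd (a b : quat) : quat :=
  Quat (q0 a + q0 b) (q1 a + q1 b) (q2 a + q2 b) (q3 a + q3 b).
Definition qopp (a : quat) : quat := Quat (- q0 a) (- q1 a) (- q2 a) (- q3 a).
Definition qsub (a b : quat) : quat := qadd a (qopp b).
Definition qmul (a b : quat) : quat :=
  Quat (q0 a * q0 b - q1 a * q1 b - q2 a * q2 b - q3 a * q3 b)
       (q0 a * q1 b + q1 a * q0 b + q2 a * q3 b - q3 a * q2 b)
       (q0 a * q2 b - q1 a * q3 b + q2 a * q0 b + q3 a * q1 b)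
       (q0 a * q3 b + q1 a * q2 b - q2 a * q1 b + q3 a * q0 b).
Definition qconj (a : quat) : quat := Quat (q0 a) (- q1 a) (- q2 a) (- q3 a).
Definition qnorm2 (a : quat) : R := q0 a ^ 2 + q1 a ^ 2 + q2 a ^ 2 + q3 a ^ 2.
Definition qnorm (a : quat) : R := sqrt (qnorm2 a).
Definition qRe (a : quat) : R := q0 a.
Definition qinv (a : quat) : quat :=
  let n := qnorm2 a in
  Quat (q0 a / n) (- q1 a / n) (- q2 a / n) (- q3 a / n).
Fixpoint qpow (a : quat) (n : nat) : quat :=
  match n with O => qone | S k => qmul a (qpow a k) end.

Record QBanach : Type := {
  car :> Type;
  vzero : car;
  vadd : car -> car -> car;
  vopp : car -> car;
  lmul : quat -> car -> car;
  rmul : car -> quat -> car;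
  vnorm : car -> R;
  vadd_assoc : forall u v w, vadd u (vadd v w) = vadd (vadd u v) w;
  vadd_comm : forall u v, vadd u v = vadd v u;
  vadd_0 : forall v, vadd v vzero = v;
  vadd_opp : forall v, vadd v (vopp v) = vzero;
  lmul_assoc : forall a b v, lmul (qmul a b) v = lmul a (lmul b v);
  lmul_addq : forall a b v, lmul (qadd a b) v = vadd (lmul a v) (lmul b v);
  lmul_addv : forall a u v, lmul a (vadd u v) = vadd (lmul a u) (lmul a v);
  lmul_1 : forall v, lmul qone v = v;
  rmul_assoc : forall a b v, rmul v (qmul a b) = rmul (rmul v a) b;
  rmul_addq : forall a b v, rmul v (qadd a b) = vadd (rmul v a) (rmul v b);
  rmul_addv : forall a u v, rmul (vadd u v) a = vadd (rmul u a) (rmul v a);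
  rmul_1 : forall v, rmul v qone = v;
  (* both quaternionic structures extend the same real vector space structure *)
  lrmul_real : forall (r : R) v, lmul (qreal r) v = rmul v (qreal r);
  lrmul_assoc : forall a b v, rmul (lmul a v) b = lmul a (rmul v b);
  vnorm_nonneg : forall v, 0 <= vnorm v;
  vnorm_eq0 : forall v, vnorm v = 0 -> v = vzero;
  vnorm_triangle : forall u v, vnorm (vadd u v) <= vnorm u + vnorm v;
  vnorm_lmul : forall a v, vnorm (lmul a v) = qnorm a * vnorm v;
  vnorm_rmul : forall a v, vnorm (rmul v a) = qnorm a * vnorm v;
  complete : forall u : nat -> car,
    (forall eps, eps > 0 -> exists N, forall m n, (m >= N)%nat -> (n >= N)%nat ->
        vnorm (vadd (u m) (vopp (u n))) < eps) ->
    exists l, forall eps, eps > 0 -> exists N, forall n, (n >= N)%nat ->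
        vnorm (vadd (u n) (vopp l)) < eps
}.

Arguments vzero {q}. Arguments vadd {q} _ _. Arguments vopp {q} _.
Arguments lmul {q} _ _. Arguments rmul {q} _ _. Arguments vnorm {q} _.

Section Ops.
Variable V : QBanach.

Definition is_BV (A : V -> V) : Prop :=
  (forall u v, A (vadd u v) = vadd (A u) (A v)) /\
  (forall v a, A (rmul v a) = rmul (A v) a) /\
  (exists C, forall v, vnorm (A v) <= C * vnorm v).

Definition opnorm_le (A : V -> V) (c : R) : Prop :=
  forall v, vnorm (A v) <= c * vnorm v.

Definition opnorm_lt (A : V -> V) (c : R) : Prop :=
  exists c', c' < c /\ opnorm_le A c'.

Definition op_sub (A B : V -> V) : V -> V := fun v => vadd (A v) (vopp (B v)).

Fixpoint op_pow (A : V -> V) (n : nat) : V -> V :=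
  match n with O => fun v => v | S k => fun v => A (op_pow A k v) end.

Definition Qs (T : V -> V) (s : quat) : V -> V :=
  fun v => vadd (vadd (T (T v)) (vopp (lmul (qreal (2 * qRe s)) (T v))))
                (lmul (qreal (qnorm s ^ 2)) v).

Definition inverse_in_BV (A B : V -> V) : Prop :=
  is_BV B /\ (forall v, A (B v) = v) /\ (forall v, B (A v) = v).

Definition in_rhoS (T : V -> V) (s : quat) : Prop :=
  exists B, inverse_in_BV (Qs T s) B.

Definition S_res (T Qi : V -> V) (s : quat) : V -> V :=
  fun v => vopp (Qi (vadd (T v) (vopp (lmul (qconj s) v)))).

Fixpoint vsum (f : nat -> V) (N : nat) : V :=
  match N with O => f O | S k => vadd (vsum f k) (f (S k)) end.

End Ops.

Arguments is_BV {V} _. Arguments opnorm_le {V} _ _. Arguments opnorm_lt {V} _ _.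
Arguments op_sub {V} _ _. Arguments op_pow {V} _ _. Arguments Qs {V} _ _.
Arguments inverse_in_BV {V} _ _. Arguments in_rhoS {V} _ _.
Arguments S_res {V} _ _ _. Arguments vsum {V} _ _.

(* Main.v *)
Require Import Defs.
From Stdlib Require Import Reals Lra Lia Psatz.
Open Scope R_scope.

Lemma quat_eq a b c d a' b' c' d' : a = a' -> b = b' -> c = c' -> d = d' ->
  Quat a b c d = Quat a' b' c' d'.
Proof. intros; subst; reflexivity. Qed.

Ltac qsolve := repeat match goal with q : quat |- _ => destruct q end;
  unfold qmul, qadd, qopp, qsub, qreal, qzero, qone, qconj, qinv, qRe, qnorm2 in *;
  simpl in *; apply quat_eq.

Lemma vadd_0l (V : QBanach) (v : V) : vadd vzero v = v.
Proof. rewrite vadd_comm; apply vadd_0. Qed.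
Lemma vadd_oppl (V : QBanach) (v : V) : vadd (vopp v) v = vzero.
Proof. rewrite vadd_comm; apply vadd_opp. Qed.
Lemma vadd_cancel_l (V : QBanach) (u v w : V) : vadd u v = vadd u w -> v = w.
Proof.
  intro H. rewrite <- (vadd_0l V v), <- (vadd_0l V w), <- (vadd_oppl V u).
  rewrite <- !vadd_assoc, H. reflexivity.
Qed.
Lemma vopp_unique (V : QBanach) (u v : V) : vadd u v = vzero -> v = vopp u.
Proof. intro H. apply (vadd_cancel_l V u). rewrite H, vadd_opp. reflexivity. Qed.
Lemma vopp_opp (V : QBanach) (u : V) : vopp (vopp u) = u.
Proof. symmetry. apply vopp_unique. apply vadd_oppl. Qed.
Lemma vopp_add (V : QBanach) (u v : V) : vopp (vadd u v) = vadd (vopp u) (vopp v).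
Proof. symmetry. apply vopp_unique.
  rewrite (vadd_comm V (vopp u)), vadd_assoc, <- (vadd_assoc V u v), vadd_opp, vadd_0, vadd_opp.
  reflexivity. Qed.
Lemma vopp_zero (V : QBanach) : vopp (@vzero V) = vzero.
Proof. symmetry. apply vopp_unique. apply vadd_0. Qed.

Lemma add_zero (V : QBanach) (f : V -> V) : (forall u v, f (vadd u v) = vadd (f u) (f v)) ->
  f vzero = vzero.
Proof. intro H. apply (vadd_cancel_l V (f vzero)). rewrite <- H, !vadd_0. reflexivity. Qed.
Lemma add_opp (V : QBanach) (f : V -> V) : (forall u v, f (vadd u v) = vadd (f u) (f v)) ->
  forall v, f (vopp v) = vopp (f v).
Proof. intros H v. apply vopp_unique. rewrite <- H, vadd_opp. apply add_zero; auto. Qed.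

Lemma lmul_q0 (V : QBanach) (v : V) : lmul qzero v = vzero.
Proof. apply (vadd_cancel_l V (lmul qzero v)). rewrite <- lmul_addq, vadd_0.
  f_equal. unfold qadd, qzero, qreal; simpl. f_equal; ring. Qed.
Lemma lmul_v0 (V : QBanach) a : lmul a (@vzero V) = vzero.
Proof. apply add_zero. intros; apply lmul_addv. Qed.
Lemma lmul_opp (V : QBanach) a (v : V) : lmul a (vopp v) = vopp (lmul a v).
Proof. apply add_opp. intros; apply lmul_addv. Qed.
Lemma vopp_lmul (V : QBanach) (v : V) : vopp v = lmul (qreal (-1)) v.
Proof. symmetry. apply vopp_unique. rewrite <- (lmul_1 V v) at 1. rewrite <- lmul_addq.
  rewrite <- (lmul_q0 V v). f_equal. unfold qadd, qone, qzero, qreal; simpl; f_equal; ring. Qed.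

Lemma G1 (V : QBanach) (x y z : V) :
  vadd x (vopp y) = vadd (vadd (vopp z) (vopp y)) (vadd z x).
Proof.
  rewrite (vadd_comm V (vopp z) (vopp y)), <- vadd_assoc, (vadd_assoc V (vopp z) z x),
    vadd_oppl, vadd_0l. apply vadd_comm.
Qed.
Lemma G2 (V : QBanach) (a b c d : V) :
  vadd (vadd a b) (vadd c d) = vadd (vadd a c) (vadd b d).
Proof.
  rewrite <- !vadd_assoc. f_equal. rewrite !vadd_assoc. f_equal. apply vadd_comm.
Qed.
Lemma G3 (V : QBanach) (W a b c d : V) : vadd a d = vzero ->
  vadd (vadd W (vadd a b)) (vadd c d) = vadd W (vadd b c).
Proof.
  intro H. rewrite <- !vadd_assoc. f_equal.
  rewrite (vadd_comm V c d), (vadd_assoc V b d c), (vadd_comm V b d), <- (vadd_assoc V d b c).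
  rewrite (vadd_assoc V a d), H, vadd_0l. reflexivity.
Qed.
Lemma G4 (V : QBanach) (y e : V) : vadd (vadd (vopp y) e) (vopp (vopp y)) = e.
Proof. rewrite vopp_opp, (vadd_comm V (vopp y) e), <- vadd_assoc, vadd_oppl, vadd_0. reflexivity. Qed.

Definition additive (V : QBanach) (A : V -> V) := forall u v, A (vadd u v) = vadd (A u) (A v).
Definition realcomm (V : QBanach) (A : V -> V) :=
  forall x v, A (lmul (qreal x) v) = lmul (qreal x) (A v).

Lemma pow_additive V A : additive V A -> forall n, additive V (op_pow A n).
Proof. intros H n; induction n; intros u v; simpl; auto. rewrite IHn; auto. Qed.
Lemma pow_realcomm V A : realcomm V A -> forall n, realcomm V (op_pow A n).
Proof. intros H n; induction n; intros u v; simpl; auto. rewrite IHn; auto. Qed.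

Lemma qmul_one_r a : qmul a qone = a.
Proof. destruct a; unfold qmul, qone, qreal; simpl; apply quat_eq; ring. Qed.

Lemma main_id (V : QBanach) (A : V -> V) (HA : additive V A) (HR : realcomm V A)
  (b2 : R) (p q : quat) (H1 : qmul (qreal b2) q = qopp p)
  (H2 : forall n, qadd (qpow q n) (qmul (qreal b2) (qpow q (S (S n)))) = qzero)
  (v : V) : forall N,
  let Q := fun x => vadd (A (A x)) (lmul (qreal b2) x) in
  Q (vsum (fun n => op_pow A n (lmul (qpow q (S n)) v)) N) =
  vadd (vopp (vadd (A v) (lmul p v)))
       (vadd (op_pow A (S N) (lmul (qpow q N) v)) (op_pow A (S (S N)) (lmul (qpow q (S N)) v))).
Proof.
  intros N Q. unfold Q. induction N.
  - simpl. rewrite qmul_one_r, lmul_1, <- lmul_assoc, H1.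
    assert (E : lmul (qopp p) v = vopp (lmul p v)).
    { rewrite (vopp_lmul V (lmul p v)), <- lmul_assoc. f_equal.
      destruct p; unfold qmul, qopp, qreal; simpl; apply quat_eq; ring. }
    rewrite E, vopp_add. apply G1.
  - cbn [vsum]. rewrite !HA, lmul_addv, G2, IHN.
    apply G3.
    rewrite <- (pow_realcomm V A HR (S N)), <- (pow_additive V A HA (S N)), <- lmul_assoc.
    rewrite <- lmul_addq, H2, lmul_q0.
    apply add_zero. apply pow_additive; auto.
Qed.

Lemma qnorm2_nonneg a : 0 <= qnorm2 a.
Proof. unfold qnorm2; nra. Qed.
Lemma qnorm_mul a b : qnorm (qmul a b) = qnorm a * qnorm b.
Proof. unfold qnorm. rewrite <- sqrt_mult by apply qnorm2_nonneg. f_equal.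
  destruct a, b; unfold qnorm2, qmul; simpl; ring. Qed.
Lemma qnorm_one : qnorm qone = 1.
Proof. unfold qnorm, qnorm2, qone, qreal; simpl. transitivity (sqrt 1); [f_equal; ring | apply sqrt_1]. Qed.
Lemma qnorm_pow a n : qnorm (qpow a n) = qnorm a ^ n.
Proof. induction n; simpl. apply qnorm_one. rewrite qnorm_mul, IHn; reflexivity. Qed.

Lemma T_realcomm (V : QBanach) (T : V -> V) : is_BV T -> realcomm V T.
Proof. intros [_ [H _]] x v. rewrite lrmul_real, H, lrmul_real. reflexivity. Qed.

Lemma A_additive (V : QBanach) (T : V -> V) r : is_BV T -> additive V (op_sub T (lmul (qreal r))).
Proof. intros [H _] u v. unfold op_sub. rewrite H, lmul_addv, vopp_add. apply G2. Qed.

Lemma A_realcomm (V : QBanach) (T : V -> V) r : is_BV T -> realcomm V (op_sub T (lmul (qreal r))).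
Proof. intros HT x v. unfold op_sub. rewrite (T_realcomm V T HT), lmul_addv, lmul_opp.
  f_equal. f_equal. rewrite <- !lmul_assoc. f_equal.
  unfold qmul, qreal; simpl; apply quat_eq; ring. Qed.

Lemma I1 (V : QBanach) (T : V -> V) s (HT : is_BV T) x :
  Qs T s x = vadd (op_sub T (lmul (qreal (qRe s))) (op_sub T (lmul (qreal (qRe s))) x))
     (lmul (qreal (qnorm2 (qsub s (qreal (qRe s))))) x).
Proof.
  unfold Qs, op_sub. destruct HT as [Hadd [Hr Hb]].
  rewrite Hadd, (add_opp V T Hadd), (T_realcomm V T (conj Hadd (conj Hr Hb))).
  rewrite lmul_addv, lmul_opp, vopp_add, vopp_opp.
  set (X := T (T x)). set (Y := T x). set (R0 := qRe s).
  rewrite <- !vadd_assoc. f_equal.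
  rewrite (vadd_assoc V (vopp (lmul (qreal R0) Y)) (vopp (lmul (qreal R0) Y))).
  rewrite <- vopp_add, <- lmul_addq, <- lmul_assoc, <- lmul_addq.
  unfold qnorm. rewrite pow2_sqrt by apply qnorm2_nonneg.
  f_equal; [f_equal; f_equal|f_equal];
  destruct s; unfold R0, qadd, qreal, qmul, qnorm2, qsub, qopp, qRe; simpl; apply quat_eq; ring.
Qed.

Lemma I2 (V : QBanach) (T : V -> V) s v :
  vadd (T v) (vopp (lmul (qconj s) v)) =
  vadd (op_sub T (lmul (qreal (qRe s))) v) (lmul (qsub s (qreal (qRe s))) v).
Proof.
  unfold op_sub. rewrite <- vadd_assoc. f_equal.
  rewrite !vopp_lmul, <- !lmul_assoc, <- lmul_addq. f_equal.
  destruct s; unfold qadd, qreal, qmul, qsub, qopp, qRe, qconj; simpl; apply quat_eq; ring.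
Qed.

Lemma QH1 s : let p := qsub s (qreal (qRe s)) in qnorm2 p <> 0 ->
  qmul (qreal (qnorm2 p)) (qinv p) = qopp p.
Proof.
  intros p Hp. unfold p in *. destruct s. unfold qnorm2, qinv, qmul, qreal, qsub, qadd, qopp, qRe in *; simpl in *. unfold qnorm2 in *; simpl in *.
  unfold qnorm2 in *; simpl in *. unfold qnorm2 in *; simpl in *. apply quat_eq; field; contradict Hp; ring_simplify; ring_simplify in Hp; lra.
Qed.

Lemma qmul_assoc a b c : qmul a (qmul b c) = qmul (qmul a b) c.
Proof. destruct a, b, c; unfold qmul; simpl; apply quat_eq; ring. Qed.

Lemma qinv_r p : qnorm2 p <> 0 -> qmul p (qinv p) = qone.
Proof.
  intro Hp. destruct p as [a b c d].
  unfold qinv, qmul, qone, qreal. cbn [q0 q1 q2 q3].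
  set (n := qnorm2 _) in *.
  assert (Hn : n = a * a + b * b + c * c + d * d) by (unfold n, qnorm2; simpl; ring).
  clearbody n.
  apply quat_eq; [ | field; exact Hp | field; exact Hp | field; exact Hp].
  transitivity ((a * a + b * b + c * c + d * d) / n). field; exact Hp.
  rewrite <- Hn. field; exact Hp.
Qed.

Lemma qinv_l p : qnorm2 p <> 0 -> qmul (qinv p) p = qone.
Proof.
  intro Hp. destruct p as [a b c d].
  unfold qinv, qmul, qone, qreal. cbn [q0 q1 q2 q3].
  set (n := qnorm2 _) in *.
  assert (Hn : n = a * a + b * b + c * c + d * d) by (unfold n, qnorm2; simpl; ring).
  clearbody n.
  apply quat_eq; [ | field; exact Hp | field; exact Hp | field; exact Hp].
  transitivity ((a * a + b * b + c * c + d * d) / n). field; exact Hp.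
  rewrite <- Hn. field; exact Hp.
Qed.

Lemma QH2 s : let p := qsub s (qreal (qRe s)) in qnorm2 p <> 0 ->
  forall n, qadd (qpow (qinv p) n) (qmul (qreal (qnorm2 p)) (qpow (qinv p) (S (S n)))) = qzero.
Proof.
  intros p Hp n. simpl. generalize (qpow (qinv p) n) as x. intro x.
  assert (H1 : qmul (qreal (qnorm2 p)) (qinv p) = qopp p) by (apply QH1; exact Hp).
  rewrite !qmul_assoc, H1.
  assert (Hneg : forall a b, qmul (qopp a) b = qopp (qmul a b))
    by (intros [] []; unfold qmul, qopp; simpl; apply quat_eq; ring).
  rewrite Hneg.
  rewrite qinv_r by exact Hp.
  destruct x; unfold qadd, qmul, qopp, qone, qreal, qzero; simpl; apply quat_eq; ring.
Qed.

Lemma qnorm_inv p : qnorm2 p <> 0 -> qnorm (qinv p) * qnorm p = 1.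
Proof.
  intro Hp. rewrite <- qnorm_mul, <- qnorm_one. f_equal. apply qinv_l; exact Hp.
Qed.

Lemma pow_bound (V : QBanach) (A : V -> V) c : 0 <= c -> opnorm_le A c ->
  forall n w, vnorm (op_pow A n w) <= c ^ n * vnorm w.
Proof.
  intros Hc H n; induction n; intro w; simpl. lra.
  eapply Rle_trans. apply H. rewrite Rmult_assoc. apply Rmult_le_compat_l; auto.
Qed.

Theorem theorem4p11 (V : QBanach) (T : V -> V) (s : quat)
  (HT : is_BV T)
  (Hs : in_rhoS T s)
  (Hnorm : opnorm_lt (op_sub T (lmul (qreal (qRe s))))
                     (qnorm (qsub s (qreal (qRe s)))))
  (Qi : V -> V) (HQi : inverse_in_BV (Qs T s) Qi) :
  forall eps, eps > 0 -> exists N0 : nat, forall N, (N >= N0)%nat ->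
    opnorm_le
      (op_sub
         (fun v => vsum (fun n => op_pow (op_sub T (lmul (qreal (qRe s)))) n
                           (lmul (qpow (qinv (qsub s (qreal (qRe s)))) (S n)) v)) N)
         (S_res T Qi s))
      eps.
Proof.
  intros eps Heps.
  destruct Hnorm as [c [Hc Hcle]].
  set (A := op_sub T (lmul (qreal (qRe s)))) in *.
  set (p := qsub s (qreal (qRe s))) in *.
  destruct (Rlt_or_le c 0) as [Hneg|Hpos].
  { assert (Hz : forall w : V, vnorm w = 0).
    { intro w. specialize (Hcle w). pose proof (vnorm_nonneg V (A w)).
      pose proof (vnorm_nonneg V w). nra. }
    exists 0%nat. intros N _ v. rewrite !Hz. lra. }
  assert (Hb2 : qnorm2 p <> 0).
  { intro H0. unfold qnorm in Hc. rewrite H0, sqrt_0 in Hc. lra. }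
  pose proof (qnorm_inv p Hb2) as Hinv.
  assert (Hbeta : 0 < qnorm p) by lra.
  set (t := qnorm (qinv p)) in *.
  set (x := c * t).
  assert (Ht : t = / qnorm p) by (apply (Rmult_eq_reg_r (qnorm p)); [rewrite Rinv_l; lra | lra]).
  assert (Hx0 : 0 <= x) by (unfold x; rewrite Ht; apply Rmult_le_pos; [lra | left; apply Rinv_0_lt_compat; lra]).
  assert (Hx1 : x < 1).
  { unfold x. rewrite Ht. apply (Rmult_lt_reg_r (qnorm p)); auto.
    rewrite Rmult_assoc, Rinv_l; lra. }
  destruct HQi as [[HQadd [_ [C HC]]] [HQ1 HQ2]].
  set (K := Rabs C).
  set (M := K * c * (1 + x)).
  assert (HM : 0 <= M) by (unfold M, K; pose proof (Rabs_pos C); apply Rmult_le_pos; [apply Rmult_le_pos|]; lra).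
  destruct (pow_lt_1_zero x ltac:(rewrite Rabs_pos_eq; lra) (eps / (M + 1)))
    as [N0 HN0].
  { apply Rdiv_lt_0_compat; lra. }
  exists N0. intros N HN v.
  set (q := qinv p).
  set (E := vadd (op_pow A (S N) (lmul (qpow q N) v)) (op_pow A (S (S N)) (lmul (qpow q (S N)) v))).
  assert (Hkey : op_sub (fun v0 => vsum (fun n => op_pow A n (lmul (qpow q (S n)) v0)) N)
                  (S_res T Qi s) v = Qi E).
  { pose proof (main_id V A (A_additive V T _ HT) (A_realcomm V T _ HT) (qnorm2 p) p q
                 (QH1 s Hb2) (QH2 s Hb2) v N) as Hm. cbv zeta in Hm.
    unfold op_sub at 1, S_res. rewrite I2. fold A p.
    set (Sn := vsum _ N) in *.
    assert (HS : Sn = Qi (Qs T s Sn)) by (symmetry; apply HQ2).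
    rewrite HS at 1. rewrite (I1 V T s HT). change (op_sub T (lmul (qreal (qRe s)))) with A. fold p. rewrite Hm.
    rewrite HQadd, (add_opp V Qi HQadd). apply G4. }
  rewrite Hkey.
  assert (HE : vnorm E <= c * (1 + x) * x ^ N * vnorm v).
  { unfold E. eapply Rle_trans. apply vnorm_triangle.
    pose proof (pow_bound V A c Hpos Hcle) as Hpb.
    eapply Rle_trans. apply Rplus_le_compat; apply Hpb.
    rewrite !vnorm_lmul, !qnorm_pow. fold t.
    unfold x. rewrite !Rpow_mult_distr. simpl. pose proof (vnorm_nonneg V v).
    assert (0 <= c ^ N) by (apply pow_le; lra).
    assert (0 <= t ^ N) by (apply pow_le; rewrite Ht; left; apply Rinv_0_lt_compat; lra).
    change (qnorm q) with t. apply Req_le. ring. }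
  assert (Hv : 0 <= vnorm v) by apply vnorm_nonneg.
  assert (HxN : x ^ N < eps / (M + 1)).
  { specialize (HN0 N HN). rewrite Rabs_pos_eq in HN0; auto. apply pow_le; lra. }
  assert (HxN0 : 0 <= x ^ N) by (apply pow_le; lra).
  eapply Rle_trans. apply HC.
  assert (HCK : C <= K) by apply Rle_abs.
  assert (HE0 : 0 <= vnorm E) by apply vnorm_nonneg.
  assert (H1 : C * vnorm E <= K * vnorm E) by (apply Rmult_le_compat_r; auto).
  assert (H2 : K * vnorm E <= M * x ^ N * vnorm v).
  { unfold M. replace (K * c * (1 + x) * x ^ N * vnorm v) with (K * (c * (1 + x) * x ^ N * vnorm v)) by ring.
    apply Rmult_le_compat_l; auto. apply Rabs_pos. }
  assert (H3 : M * x ^ N <= eps).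
  { apply Rle_trans with (M * (eps / (M + 1))).
    apply Rmult_le_compat_l; lra.
    unfold Rdiv. apply (Rmult_le_reg_r (M + 1)). lra.
    rewrite Rmult_assoc, Rmult_assoc, Rinv_l by lra. nra. }
  assert (H4 : M * x ^ N * vnorm v <= eps * vnorm v) by (apply Rmult_le_compat_r; auto).
  lra.
Qed.
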